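(* Let $G=(V,E)$ be a graph with a partition $(V_1,V_2)$ of $V$ such that $G[V_1]$ and $G[V_2]$ are $P_5$-free, and let $k$ be an integer. Suppose that: $k\ge 1$; $G$ contains a $P_5$; every vertex of $G$ lies on some $P_5$ in $G$; every $P_5$ in $G$ contains at least $4$ vertices of $V_2$; and there is no vertex $v\in V_2$ that is isolated in $G[V_2]$ and for which there is a path $(v,w,x,y,z)$ in $G$ with $w\in V_1$. Then $G[V_2]$ has no isolated vertices.
   Context: Graphs are finite, simple and undirected. A $P_5$ is a path on $5$ vertices (as a not necessarily induced subgraph), written as the sequence of its vertices; a graph is $P_5$-free if it contains no $P_5$. $G[X]$ denotes the subgraph induced by $X$. *)

(* Defs.v *)
From mathcomp Require Import all_boot.
Set Implicit Arguments. Unset Strict Implicit. Unset Printing Implicit Defensive.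

Definition simple_graph (T : finType) (e : rel T) : Prop :=
  symmetric e /\ irreflexive e.

(* (a,b,c,d,f) is a P5 in G: five distinct vertices, consecutive ones adjacent
   (not necessarily induced). *)
Definition is_P5 (T : finType) (e : rel T) (a b c d f : T) : bool :=
  uniq [:: a; b; c; d; f] && [&& e a b, e b c, e c d & e d f].

Definition has_P5 (T : finType) (e : rel T) : Prop :=
  exists a b c d f, is_P5 e a b c d f.

(* G[X] is P5-free: no P5 of G with all vertices in X (the edges of G[X]
   are exactly the edges of G between vertices of X). *)
Definition P5_free_in (T : finType) (e : rel T) (X : {set T}) : Prop :=
  forall a b c d f, is_P5 e a b c d f ->
    ~~ all (fun x => x \in X) [:: a; b; c; d; f].

Definition isolated_in (T : finType) (e : rel T) (X : {set T}) (v : T) : Prop :=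
  v \in X /\ forall u, u \in X -> ~~ e v u.

(* Main.v *)
Require Import Defs.
From mathcomp Require Import all_boot.

Theorem lemma4 (T : finType) (e : rel T) (V1 V2 : {set T}) (k : nat) :
  simple_graph e ->
  V1 :&: V2 = set0 -> V1 :|: V2 = setT ->
  P5_free_in e V1 -> P5_free_in e V2 ->
  1 <= k ->
  has_P5 e ->
  (forall v : T, exists a b c d f, is_P5 e a b c d f /\ v \in [:: a; b; c; d; f]) ->
  (forall a b c d f, is_P5 e a b c d f ->
     4 <= count (fun x => x \in V2) [:: a; b; c; d; f]) ->
  ~ (exists v, isolated_in e V2 v /\
       exists w x y z, is_P5 e v w x y z /\ w \in V1) ->
  forall v, ~ isolated_in e V2 v.
Proof.
move=> [esym _] _ hU _ _ _ _ hall hcnt hno v [vV2 iso].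
have nb : forall u, e v u -> u \notin V2.
  by move=> u evu; apply/negP => uV2; move: (iso u uV2); rewrite evu.
have inV1 : forall u, u \notin V2 -> u \in V1.
  move=> u uV2; have : u \in V1 :|: V2 by rewrite hU inE.
  by rewrite inE (negbTE uV2) orbF.
have [a [b [c [d [f [P mem]]]]]] := hall v.
have P' := P.
move: P' => /andP[_ /and4P[eab ebc ecd edf]].
have C := hcnt _ _ _ _ _ P.
move: mem; rewrite !inE => /orP[/eqP Ha|/orP[/eqP Hb|/orP[/eqP Hc|/orP[/eqP Hd|/eqP Hf]]]]; subst v.
- apply: hno; exists a; split; first by split.
  by exists b, c, d, f; split => //; apply: inV1; apply: nb.
- have h1 := nb a; rewrite esym in h1; move: (h1 eab) => {}h1.
  have h2 := nb c ebc.
  by move: C; rewrite /= (negbTE h1) (negbTE h2); case: (b \in V2); case: (d \in V2); case: (f \in V2).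
- have h1 := nb b; rewrite esym in h1; move: (h1 ebc) => {}h1.
  have h2 := nb d ecd.
  by move: C; rewrite /= (negbTE h1) (negbTE h2); case: (a \in V2); case: (c \in V2); case: (f \in V2).
- have h1 := nb c; rewrite esym in h1; move: (h1 ecd) => {}h1.
  have h2 := nb f edf.
  by move: C; rewrite /= (negbTE h1) (negbTE h2); case: (a \in V2); case: (b \in V2); case: (d \in V2).
- apply: hno; exists f; split; first by split.
  exists d, c, b, a; split; last by apply: inV1; apply: nb; rewrite esym.
  move: P; rewrite /is_P5 => /andP[U _].
  apply/andP; split; last by rewrite (esym f d) (esym d c) (esym c b) (esym b a) edf ecd ebc eab.
  by have := U; rewrite -rev_uniq.
Qed.
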